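(* Let $\mathcal U$ be an unbalanced critical update family and let $K\subset\mathbb Z^2$ with $2\le|K|<\infty$ be such that $[K]$ is strongly connected. Then there is a partition $K=K_1\cup K_2$ into non-empty disjoint sets such that $[K_1]$, $[K_2]$ and $[K_1]\cup[K_2]$ are all strongly connected.
   Context: Update family $\mathcal U$: finite collection of finite subsets of $\mathbb Z^2\setminus\{0\}$; $A_0=A$, $A_{t+1}=A_t\cup\{x:x+X\subset A_t\text{ for some }X\in\mathcal U\}$, $[A]=\bigcup_tA_t$. (Unbalanced critical is as in the paper: $1\le\alpha(\mathcal U)<\infty$ and no closed semicircle of directions all have difficulty at most $\alpha(\mathcal U)$; only the choice of $\kappa$ depends on this.) $\nu=\max\{\|x-y\|:x,y\in X\cup\{0\},X\in\mathcal U\}$ and $\kappa=3\nu$. A set $S\subset\mathbb Z^2$ is strongly connected if it is connected in the graph on $\mathbb Z^2$ in which $x,y$ are adjacent iff $\|x-y\|_2\le\kappa$. *)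

(* Defs.v *)
From Stdlib Require Import Reals ZArith List.
Import ListNotations.
Open Scope R_scope.

Definition pt := (Z * Z)%type.
Definition padd (x y : pt) : pt := ((fst x + fst y)%Z, (snd x + snd y)%Z).

Definition update_family := list (list pt).
Definition valid_family (U : update_family) : Prop :=
  forall X, In X U -> ~ In (0%Z, 0%Z) X.

Fixpoint iter_step (U : update_family) (A : pt -> Prop) (t : nat) : pt -> Prop :=
  match t with
  | O => A
  | S t' => fun x => iter_step U A t' x \/
             exists X, In X U /\ forall y, In y X -> iter_step U A t' (padd x y)
  end.

Definition closure (U : update_family) (A : pt -> Prop) : pt -> Prop :=
  fun x => exists t, iter_step U A t x.

Definition dist2 (x y : pt) : Z :=
  ((fst x - fst y) * (fst x - fst y) + (snd x - snd y) * (snd x - snd y))%Z.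
Definition edist (x y : pt) : R := sqrt (IZR (dist2 x y)).

Definition nu (U : update_family) : R :=
  fold_right Rmax 0
    (flat_map (fun X => let P := (0%Z, 0%Z) :: X in
                 flat_map (fun x => map (fun y => edist x y) P) P) U).
Definition kappa (U : update_family) : R := 3 * nu U.

Definition adj (U : update_family) (x y : pt) : Prop := edist x y <= kappa U.

Definition strongly_connected (U : update_family) (S : pt -> Prop) : Prop :=
  forall x y, S x -> S y ->
    Relation_Operators.clos_refl_trans pt
      (fun a b => S a /\ S b /\ adj U a b) x y.

Definition direction (u : R * R) : Prop := fst u * fst u + snd u * snd u = 1.

Definition halfplane (u : R * R) : pt -> Prop :=
  fun x => IZR (fst x) * fst u + IZR (snd x) * snd u < 0.

Definition stable (U : update_family) (u : R * R) : Prop :=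
  forall x, closure U (halfplane u) x -> halfplane u x.

Definition finite_set (S : pt -> Prop) : Prop :=
  exists l : list pt, forall x, S x -> In x l.

(* alpha(u) <= k, where alpha(u) = 0 if u is unstable, and otherwise
   alpha(u) = min |Z| (possibly infinite) such that [H_u ∪ Z] \ H_u is infinite *)
Definition difficulty_le (U : update_family) (u : R * R) (k : nat) : Prop :=
  ~ stable U u \/
  exists Z : list pt, (length Z <= k)%nat /\
    ~ finite_set (fun x => closure U (fun y => halfplane u y \/ In y Z) x
                            /\ ~ halfplane u x).

Definition open_semicircle (v u : R * R) : Prop :=
  direction u /\ fst u * fst v + snd u * snd v > 0.
Definition closed_semicircle (v u : R * R) : Prop :=
  direction u /\ fst u * fst v + snd u * snd v >= 0.

(* alpha(U) = min over open semicircles C of max_{u in C} alpha(u);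
   alpha(U) <= k  iff some open semicircle has all difficulties <= k *)
Definition alpha_le (U : update_family) (k : nat) : Prop :=
  exists v, direction v /\
    forall u, open_semicircle v u -> difficulty_le U u k.

Definition unbalanced_critical (U : update_family) : Prop :=
  exists a : nat, (1 <= a)%nat /\ alpha_le U a /\ ~ alpha_le U (a - 1) /\
    ~ (exists v, direction v /\
         forall u, closed_semicircle v u -> difficulty_le U u a).

(* Main.v *)
Require Import Defs.
From Stdlib Require Import Reals ZArith List Lra Lia Classical Permutation.
Import ListNotations.
Open Scope R_scope.

Lemma fold_max_ge0 (l : list R) : 0 <= fold_right Rmax 0 l.
Proof. induction l as [|a l IHl]; simpl. lra. apply Rle_trans with (fold_right Rmax 0 l). apply IHl. apply Rmax_r. Qed.

Lemma fold_max_in (l : list R) r : In r l -> r <= fold_right Rmax 0 l.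
Proof.
  induction l as [|a l IHl]; simpl; intros H. destruct H.
  destruct H as [<-|H]. apply Rmax_l. eapply Rle_trans. apply IHl, H. apply Rmax_r.
Qed.

Lemma nu_ge0 U : 0 <= nu U.
Proof. apply fold_max_ge0. Qed.

Lemma nu_le_kappa U : nu U <= kappa U.
Proof. unfold kappa. pose proof (nu_ge0 U). lra. Qed.

Lemma nu_pair U X y z : In X U -> In y ((0%Z,0%Z)::X) -> In z ((0%Z,0%Z)::X) ->
  edist y z <= nu U.
Proof.
  intros HX Hy Hz. apply fold_max_in. apply in_flat_map. exists X. split; auto.
  apply in_flat_map. exists y. split; auto. apply in_map_iff. exists z. auto.
Qed.

Lemma edist_sym x y : edist x y = edist y x.
Proof. unfold edist, dist2. f_equal. f_equal. ring. Qed.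

Lemma edist_shift x y z : edist (padd x y) (padd x z) = edist y z.
Proof. unfold edist, dist2, padd; simpl. f_equal. f_equal. ring. Qed.

Lemma edist_shift0 x y : edist x (padd x y) = edist (0%Z,0%Z) y.
Proof. unfold edist, dist2, padd; simpl. f_equal. f_equal. ring. Qed.

Lemma edist_refl x : edist x x = 0.
Proof. unfold edist, dist2. replace (_ + _)%Z with 0%Z by ring. simpl. apply sqrt_0. Qed.

Lemma adj_sym U x y : adj U x y -> adj U y x.
Proof. unfold adj. rewrite edist_sym. auto. Qed.

Lemma adj_refl U x : adj U x x.
Proof. unfold adj. rewrite edist_refl. pose proof (nu_ge0 U). unfold kappa. lra. Qed.

Lemma iter_mono U A t t' x : (t <= t')%nat -> iter_step U A t x -> iter_step U A t' x.
Proof. intros H. induction H; auto. intros Hx. simpl. left. auto. Qed.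

Lemma closure_incl U (A : pt -> Prop) x : A x -> closure U A x.
Proof. intros. exists 0%nat. exact H. Qed.

Lemma closure_mono U (A B : pt -> Prop) : (forall x, A x -> B x) ->
  forall x, closure U A x -> closure U B x.
Proof.
  intros HAB x [t Ht]. exists t. revert x Ht. induction t; simpl; intros x Ht; auto.
  destruct Ht as [H|[X [HX H]]]. left; auto. right. exists X. split; auto.
Qed.

Lemma closure_closed U B x X : In X U ->
  (forall y, In y X -> closure U B (padd x y)) -> closure U B x.
Proof.
  intros HX H.
  assert (exists t, forall y, In y X -> iter_step U B t (padd x y)) as [t Ht].
  { clear HX. induction X as [|y0 X IH].
    - exists 0%nat. intros y [].
    - destruct IH as [t Ht]. intros y Hy. apply H. right; auto.
      destruct (H y0 (or_introl eq_refl)) as [t0 Ht0].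
      exists (Nat.max t t0). intros y [<-|Hy].
      + eapply iter_mono. 2: exact Ht0. lia.
      + eapply iter_mono. 2: apply Ht; auto. lia. }
  exists (S t). simpl. right. exists X. auto.
Qed.

Lemma no_empty U : unbalanced_critical U -> forall X, In X U -> X <> [].
Proof.
  intros [a [_ [_ [_ Hno]]]] X HX ->. apply Hno. exists (1,0). split.
  unfold direction; simpl; lra.
  intros u _. left. intro Hs.
  assert (H0 : closure U (halfplane u) (0%Z,0%Z)).
  { exists 1%nat. simpl. right. exists []. split; auto. intros y []. }
  apply Hs in H0. unfold halfplane in H0. simpl in H0. lra.
Qed.

Definition RS U (S : pt -> Prop) := fun a b => S a /\ S b /\ adj U a b.

Lemma crt_sym U S x y :
  Relation_Operators.clos_refl_trans pt (RS U S) x y ->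
  Relation_Operators.clos_refl_trans pt (RS U S) y x.
Proof.
  induction 1. apply Relation_Operators.rt_step. destruct H as [? [? ?]].
  repeat split; auto. apply adj_sym; auto.
  apply Relation_Operators.rt_refl.
  eapply Relation_Operators.rt_trans; eauto.
Qed.

Lemma crt_mono U (S T : pt -> Prop) x y : (forall z, S z -> T z) ->
  Relation_Operators.clos_refl_trans pt (RS U S) x y ->
  Relation_Operators.clos_refl_trans pt (RS U T) x y.
Proof.
  intros HST. induction 1. apply Relation_Operators.rt_step. destruct H as [? [? ?]].
  repeat split; auto.
  apply Relation_Operators.rt_refl.
  eapply Relation_Operators.rt_trans; eauto.
Qed.

Lemma lemmaG U (A T : pt -> Prop) : (forall X, In X U -> X <> []) ->
  (forall x, A x -> T x) -> (forall x, T x -> closure U A x) ->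
  strongly_connected U T -> strongly_connected U (closure U A).
Proof.
  intros Hne HAT HTA HT.
  assert (Hreach : forall x, closure U A x -> exists a, A a /\
     Relation_Operators.clos_refl_trans pt (RS U (closure U A)) x a).
  { intros x [t Ht]. revert x Ht. induction t; simpl; intros x Ht.
    - exists x. split; auto. apply Relation_Operators.rt_refl.
    - destruct Ht as [Ht|[X [HX HXt]]]. apply IHt; auto.
      destruct X as [|y X]. exfalso; eapply Hne; eauto.
      destruct (IHt (padd x y) (HXt y (or_introl eq_refl))) as [a [Ha Hp]].
      exists a. split; auto. eapply Relation_Operators.rt_trans. 2: exact Hp.
      apply Relation_Operators.rt_step. repeat split.
      + exists (S t). simpl. right. exists (y::X). auto.
      + exists t. apply HXt. left; auto.
      + unfold adj. rewrite edist_shift0. eapply Rle_trans. 2: apply nu_le_kappa.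
        apply (nu_pair U (y::X)); simpl; auto. }
  intros x z Hx Hz. destruct (Hreach x Hx) as [a [Ha Hxa]].
  destruct (Hreach z Hz) as [c [Hc Hzc]].
  eapply Relation_Operators.rt_trans. exact Hxa.
  eapply Relation_Operators.rt_trans. 2: apply crt_sym; exact Hzc.
  apply (crt_mono U T). auto. apply HT; auto.
Qed.

Lemma union_sc U (S1 S2 : pt -> Prop) a b :
  strongly_connected U S1 -> strongly_connected U S2 -> S1 a -> S2 b -> adj U a b ->
  strongly_connected U (fun x => S1 x \/ S2 x).
Proof.
  intros H1 H2 Ha Hb Hab.
  assert (Hr : forall x, S1 x \/ S2 x ->
    Relation_Operators.clos_refl_trans pt (RS U (fun x => S1 x \/ S2 x)) x a).
  { intros x [Hx|Hx].
    - apply (crt_mono U S1). auto. apply H1; auto.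
    - eapply Relation_Operators.rt_trans. apply (crt_mono U S2). auto. apply H2. exact Hx. exact Hb.
      apply Relation_Operators.rt_step. repeat split; auto. apply adj_sym; auto. }
  intros x y Hx Hy. eapply Relation_Operators.rt_trans. apply Hr, Hx.
  apply crt_sym. apply Hr, Hy.
Qed.

Definition cl U (B : list pt) := closure U (fun x => In x B).

Definition crossadj U (P : list (list pt)) := exists l1 B1 l2 B2 l3 a b,
  P = l1 ++ B1 :: l2 ++ B2 :: l3 /\ cl U B1 a /\ cl U B2 b /\ adj U a b.

Lemma pos_lemma (P : list (list pt)) B C : In B P -> In C P ->
  B = C \/ exists l1 l2 l3, P = l1 ++ B :: l2 ++ C :: l3 \/ P = l1 ++ C :: l2 ++ B :: l3.
Proof.
  induction P as [|D P IH]; simpl; intros HB HC. destruct HB.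
  destruct HB as [<-|HB]; destruct HC as [<-|HC]; auto.
  - right. destruct (in_split _ _ HC) as [l2 [l3 ->]]. exists [], l2, l3. left; auto.
  - right. destruct (in_split _ _ HB) as [l2 [l3 ->]]. exists [], l2, l3. right; auto.
  - destruct (IH HB HC) as [?|[l1 [l2 [l3 [E|E]]]]]; auto; right; exists (D::l1), l2, l3;
    [left|right]; rewrite E; auto.
Qed.

Lemma same_block U P B C a b : ~ crossadj U P -> In B P -> In C P ->
  cl U B a -> cl U C b -> adj U a b -> B = C.
Proof.
  intros Hn HB HC Ha Hb Hab. destruct (pos_lemma P B C HB HC) as [?|[l1 [l2 [l3 [E|E]]]]]; auto;
  exfalso; apply Hn.
  - exists l1, B, l2, C, l3, a, b. auto.
  - exists l1, C, l2, B, l3, b, a. repeat split; auto. apply adj_sym; auto.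
Qed.

Definition UP U P x := exists B, In B P /\ cl U B x.

Lemma closure_in_UP U (K : list pt) P : (forall X, In X U -> X <> []) -> ~ crossadj U P ->
  (forall x, In x K -> exists B, In B P /\ In x B) ->
  forall x, closure U (fun x => In x K) x -> UP U P x.
Proof.
  intros Hne Hn HK x [t Ht]. revert x Ht. induction t; simpl; intros x Ht.
  - destruct (HK x Ht) as [B [HB Hx]]. exists B. split; auto. apply closure_incl; auto.
  - destruct Ht as [Ht|[X [HX HXt]]]. auto.
    destruct X as [|y0 X0] eqn:EX. exfalso; eapply Hne; eauto. rewrite <- EX in *.
    destruct (IHt _ (HXt y0 ltac:(rewrite EX; left; auto))) as [B [HB Hy0]].
    exists B. split; auto. apply (closure_closed U _ x X HX).
    intros y Hy. destruct (IHt _ (HXt y Hy)) as [C [HC Hy']].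
    assert (C = B) as ->; auto.
    eapply (same_block U P C B); eauto.
    unfold adj. rewrite edist_shift. eapply Rle_trans. 2: apply nu_le_kappa.
    apply (nu_pair U X); simpl; auto. right. rewrite EX. left; auto.
Qed.

Definition Inv U (K : list pt) (P : list (list pt)) :=
  (forall B, In B P -> B <> [] /\ strongly_connected U (cl U B)) /\
  (forall x, In x K <-> exists B, In B P /\ In x B) /\ NoDup (concat P).

Lemma no_cross_false U K P B1 B2 rest : (forall X, In X U -> X <> []) ->
  strongly_connected U (closure U (fun x => In x K)) ->
  Inv U K P -> P = B1 :: B2 :: rest -> ~ crossadj U P -> False.
Proof.
  intros Hne HK [Hb [Hm _]] EP Hn.
  assert (HB1 : In B1 P) by (rewrite EP; left; auto).
  assert (HB2 : In B2 P) by (rewrite EP; right; left; auto).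
  destruct B1 as [|a B1']. exfalso; apply (proj1 (Hb _ HB1)); auto.
  destruct B2 as [|b B2']. exfalso; apply (proj1 (Hb _ HB2)); auto.
  assert (Ha : In a K) by (apply Hm; exists (a::B1'); simpl; auto).
  assert (Hbk : In b K) by (apply Hm; exists (b::B2'); simpl; auto).
  assert (Hpath := HK a b (closure_incl _ _ _ Ha) (closure_incl _ _ _ Hbk)).
  assert (Hall : forall z w, Relation_Operators.clos_refl_trans pt
     (fun a b => closure U (fun x => In x K) a /\ closure U (fun x => In x K) b /\ adj U a b) z w ->
     cl U (a::B1') z -> cl U (a::B1') w).
  { induction 1; auto. intros Hz. destruct H as [_ [Hy Hxy]].
    destruct (closure_in_UP U K P Hne Hn (fun x h => proj1 (Hm x) h) _ Hy) as [C [HC Hc]].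
    assert (C = a::B1') as ->; auto. symmetry.
    eapply (same_block U P); eauto. }
  assert (Hb1 : cl U (a::B1') b) by (apply (Hall a b Hpath); apply closure_incl; simpl; auto).
  apply Hn. exists [], (a::B1'), [], (b::B2'), rest, b, b. repeat split; auto.
  apply closure_incl; simpl; auto. apply adj_refl.
Qed.

Lemma nodup_disj (l m : list pt) x : NoDup (l ++ m) -> In x l -> In x m -> False.
Proof.
  induction l as [|c l IH]; simpl; intros H Hl Hm. auto.
  inversion H; subst. destruct Hl as [<-|Hl]. apply H2. apply in_or_app; auto. eauto.
Qed.

Lemma perm5 (a b c d e : list pt) : Permutation (a ++ b ++ c ++ d ++ e) (b ++ d ++ a ++ c ++ e).
Proof.
  rewrite (app_assoc a b). rewrite (Permutation_app_comm a b). rewrite <- app_assoc.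
  apply Permutation_app_head.
  rewrite (app_assoc a c). rewrite (app_assoc (a++c) d). rewrite (Permutation_app_comm (a++c) d).
  rewrite <- !app_assoc. apply Permutation_refl.
Qed.

Lemma merge_inv U K l1 B1 l2 B2 l3 a b : (forall X, In X U -> X <> []) ->
  Inv U K (l1 ++ B1 :: l2 ++ B2 :: l3) -> cl U B1 a -> cl U B2 b -> adj U a b ->
  Inv U K ((B1 ++ B2) :: l1 ++ l2 ++ l3).
Proof.
  intros Hne [Hb [Hm Hnd]] Ha Hb2 Hab.
  assert (Hin : forall B, In B (l1 ++ l2 ++ l3) -> In B (l1 ++ B1 :: l2 ++ B2 :: l3)).
  { intros B H. rewrite !in_app_iff in *. simpl. rewrite in_app_iff. simpl. tauto. }
  assert (H1 : In B1 (l1 ++ B1 :: l2 ++ B2 :: l3)) by (apply in_or_app; simpl; auto).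
  assert (H2 : In B2 (l1 ++ B1 :: l2 ++ B2 :: l3))
    by (apply in_or_app; right; right; apply in_or_app; simpl; auto).
  split; [|split].
  - intros B [<-|HB]; [|apply Hb, Hin; auto]. split.
    + destruct B1. exfalso; apply (proj1 (Hb _ H1)); auto. discriminate.
    + apply (lemmaG U _ (fun x => cl U B1 x \/ cl U B2 x) Hne).
      * intros x Hx. apply in_app_iff in Hx as [Hx|Hx]; [left|right]; apply closure_incl; auto.
      * intros x [Hx|Hx]; eapply closure_mono; try exact Hx; intros; apply in_or_app; auto.
      * apply (union_sc U _ _ a b); auto. apply Hb; auto. apply Hb; auto.
  - intros x. rewrite Hm. split.
    + intros [B [HB Hx]]. apply in_app_iff in HB as [HB|[<-|HB]].
      * exists B. split; auto. right. apply in_or_app; auto.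
      * exists (B1++B2). split. left; auto. apply in_or_app; auto.
      * apply in_app_iff in HB as [HB|[<-|HB]].
        -- exists B. split; auto. right. apply in_or_app; right; apply in_or_app; auto.
        -- exists (B1++B2). split. left; auto. apply in_or_app; auto.
        -- exists B. split; auto. right. apply in_or_app; right; apply in_or_app; auto.
    + intros [B [[<-|HB] Hx]].
      * apply in_app_iff in Hx as [Hx|Hx]; eauto.
      * exists B. split; auto.
  - eapply Permutation_NoDup. 2: exact Hnd. simpl. rewrite !concat_app. simpl.
    rewrite concat_app. simpl. rewrite <- !app_assoc.
    exact (perm5 (concat l1) B1 (concat l2) B2 (concat l3)).
Qed.

Lemma main_alg U K (Hne : forall X, In X U -> X <> [])
  (HK : strongly_connected U (closure U (fun x => In x K))) : forall n P,
  length P = n -> (2 <= n)%nat -> Inv U K P ->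
  exists K1 K2 : list pt,
    K1 <> [] /\ K2 <> [] /\
    (forall x, In x K <-> (In x K1 \/ In x K2)) /\
    (forall x, In x K1 -> ~ In x K2) /\
    strongly_connected U (closure U (fun x => In x K1)) /\
    strongly_connected U (closure U (fun x => In x K2)) /\
    strongly_connected U
      (fun x => closure U (fun y => In y K1) x \/ closure U (fun y => In y K2) x).
Proof.
  induction n as [n IH] using (well_founded_induction lt_wf). intros P EP Hn HI.
  destruct (classic (crossadj U P)) as [[l1 [B1 [l2 [B2 [l3 [a [b [E [Ha [Hb Hab]]]]]]]]]]|Hnc].
  - destruct (Nat.eq_dec n 2) as [->|Hn3].
    + subst P. rewrite length_app in EP. simpl in EP. rewrite length_app in EP. simpl in EP.
      destruct l1; [|simpl in EP; lia]. destruct l2; [|simpl in EP; lia].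
      destruct l3; [|simpl in EP; lia]. simpl in *.
      destruct HI as [Hbl [Hm Hnd]].
      exists B1, B2. repeat split.
      * apply Hbl; simpl; auto.
      * apply Hbl; simpl; auto.
      * intros H. apply Hm in H as [B [[<-|[<-|[]]] Hx]]; auto.
      * intros [H|H]; apply Hm; [exists B1|exists B2]; simpl; auto.
      * intros x Hx1 Hx2. simpl in Hnd. rewrite app_nil_r in Hnd. eapply nodup_disj; eauto.
      * apply Hbl; simpl; auto.
      * apply Hbl; simpl; auto.
      * apply (union_sc U _ _ a b); auto; apply Hbl; simpl; auto.
    + subst P. assert (HL : length ((B1 ++ B2) :: l1 ++ l2 ++ l3) = (n - 1)%nat).
      { rewrite <- EP. simpl. repeat (rewrite length_app; simpl). lia. }
      assert (Hlt : (n - 1 < n)%nat) by lia. assert (Hge : (2 <= n - 1)%nat) by lia.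
      apply (IH (n - 1)%nat Hlt _ HL Hge).
      eapply merge_inv; eauto.
  - exfalso. destruct P as [|B1 [|B2 rest]]; simpl in EP; try lia.
    eapply no_cross_false; eauto.
Qed.

Lemma concat_single (K : list pt) : concat (map (fun x => [x]) K) = K.
Proof. induction K; simpl; auto. f_equal. auto. Qed.

Theorem mainTheorem12 (U : update_family) (K : list pt) :
  valid_family U ->
  unbalanced_critical U ->
  NoDup K -> (2 <= length K)%nat ->
  strongly_connected U (closure U (fun x => In x K)) ->
  exists K1 K2 : list pt,
    K1 <> [] /\ K2 <> [] /\
    (forall x, In x K <-> (In x K1 \/ In x K2)) /\
    (forall x, In x K1 -> ~ In x K2) /\
    strongly_connected U (closure U (fun x => In x K1)) /\
    strongly_connected U (closure U (fun x => In x K2)) /\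
    strongly_connected U
      (fun x => closure U (fun y => In y K1) x \/ closure U (fun y => In y K2) x).
Proof.
  intros _ Huc Hnd Hlen HK. pose proof (no_empty U Huc) as Hne.
  apply (main_alg U K Hne HK (length (map (fun x => [x]) K)) (map (fun x => [x]) K) eq_refl).
  rewrite length_map; auto.
  split; [|split].
  - intros B HB. apply in_map_iff in HB as [x [<- Hx]]. split. discriminate.
    apply (lemmaG U _ (fun z => z = x) Hne).
    + intros z [<-|[]]; auto.
    + intros z ->. apply closure_incl. left; auto.
    + intros z w -> ->. apply Relation_Operators.rt_refl.
  - intros x. split.
    + intros Hx. exists [x]. split. apply in_map_iff; exists x; auto. left; auto.
    + intros [B [HB Hx]]. apply in_map_iff in HB as [y [<- Hy]]. destruct Hx as [<-|[]]; auto.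
  - rewrite concat_single; auto.
Qed.
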